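(* Let $G$ be a non-complete double-critical $k$-chromatic graph and let $x\in V(G)$ with $\deg_G(x)=k+1$. Then every component of the complement $\overline{G_x}$ is either an isolated vertex or a cycle, there is at least one cycle component, and every cycle component has length at least $5$.
   Context: All graphs are finite and simple. A graph $G$ is (vertex-)critical if $\chi(G-v)<\chi(G)$ for every vertex $v\in V(G)$. A critical graph $G$ is double-critical if $\chi(G-x-y)\le\chi(G)-2$ for every edge $xy\in E(G)$. For a vertex $x$, $G_x:=G[N(x)]$ denotes the subgraph induced by the neighbourhood of $x$, and $\overline{G_x}$ its complement graph. *)

(* Defs.v *)
From mathcomp Require Import all_boot.
Set Implicit Arguments. Unset Strict Implicit. Unset Printing Implicit Defensive.

Record sgraph (T : finType) := SGraph {
  adj : rel T;
  adj_sym : symmetric adj;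
  adj_irrefl : irreflexive adj }.

Section Graphs.
Variables (T : finType) (G : sgraph T).

Definition colorable (S : {set T}) (k : nat) : bool :=
  [exists f : {ffun T -> 'I_k},
     [forall x in S, forall y in S, adj G x y ==> (f x != f y)]].

Lemma colorable_card (S : {set T}) : exists k, colorable S k.
Proof.
exists #|T|; apply/existsP; exists [ffun x => enum_rank x].
apply/forallP => x; apply/implyP => _; apply/forallP => y; apply/implyP => _.
apply/implyP => hxy; rewrite !ffunE.
apply/negP => /eqP /enum_rank_inj exy; subst y.
by rewrite adj_irrefl in hxy.
Qed.

Definition chi (S : {set T}) : nat := ex_minn (colorable_card S).

Definition chromatic : nat := chi [set: T].

Definition critical : Prop :=
  forall v : T, chi (~: [set v]) < chromatic.

Definition double_critical : Prop :=
  critical /\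
  forall x y : T, adj G x y -> chi (~: [set x; y]) <= chromatic - 2.

Definition complete : Prop := forall x y : T, x != y -> adj G x y.

Definition nbhd (x : T) : {set T} := [set y | adj G x y].

Definition deg (x : T) : nat := #|nbhd x|.

(* adjacency of the complement of G_x (on vertex set N(x)) *)
Definition co_adj (x : T) : rel T :=
  fun u v => [&& u \in nbhd x, v \in nbhd x, u != v & ~~ adj G u v].

Definition co_component (x u : T) : {set T} := [set v | connect (co_adj x) u v].

Definition co_components (x : T) : {set {set T}} :=
  [set co_component x u | u in nbhd x].

End Graphs.

Definition is_cycle (T : finType) (r : rel T) (C : {set T}) : Prop :=
  exists s : seq T,
    [/\ uniq s, 3 <= size s, C = [set v in s] &
        {in C &, forall u v, r u v = (v == next s u) || (u == next s v)}].

(* Main.v *)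
Require Import Defs.
From mathcomp Require Import all_boot.
From mathcomp Require Import zify.
Set Implicit Arguments. Unset Strict Implicit. Unset Printing Implicit Defensive.


Lemma chi_spec (T : finType) (G : sgraph T) (S : {set T}) : colorable G S (chi G S).
Proof. rewrite /chi; by case: ex_minnP. Qed.

Lemma chi_min (T : finType) (G : sgraph T) (S : {set T}) n : colorable G S n -> chi G S <= n.
Proof. rewrite /chi; case: ex_minnP => m _ H; exact: H. Qed.

Lemma colorable_nat (T : finType) (G : sgraph T) (S : {set T}) n (g : T -> nat) :
  (forall u, g u < n) ->
  (forall u v, u \in S -> v \in S -> adj G u v -> g u != g v) ->
  colorable G S n.
Proof.
move=> Hlt Hp; apply/existsP; exists [ffun u => Ordinal (Hlt u)].
apply/forallP => u; apply/implyP => uS; apply/forallP => v; apply/implyP => vS.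
apply/implyP => huv; rewrite !ffunE; exact: Hp.
Qed.

Lemma colorableP (T : finType) (G : sgraph T) (S : {set T}) n : colorable G S n ->
  exists f : {ffun T -> 'I_n}, forall u v, u \in S -> v \in S -> adj G u v ->
    nat_of_ord (f u) != nat_of_ord (f v).
Proof.
case/existsP => f /forallP Hf; exists f => u v uS vS huv.
by have /implyP/(_ uS)/forallP/(_ v)/implyP/(_ vS)/implyP/(_ huv) := Hf u.
Qed.

Lemma inC2 (T : finType) (x y u : T) : u != x -> u != y -> u \in ~: [set x; y].
Proof. by move=> ux uy; rewrite !inE negb_or ux uy. Qed.

Lemma chi_add2 (T : finType) (G : sgraph T) x y m : adj G x y ->
  colorable G (~: [set x; y]) m -> chromatic G <= m.+2.
Proof.
move=> hxy /colorableP [f Hf]; apply: chi_min.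
have xy : x != y by apply/eqP => e; subst; rewrite adj_irrefl in hxy.
apply: (@colorable_nat _ _ _ _ (fun u => if u == x then m.+1 else if u == y then m else nat_of_ord (f u))).
  by move=> u; (repeat case: ifP => _); have := ltn_ord (f u); lia.
move=> u v _ _ huv.
case: (eqVneq u x) => [eu|ux]; case: (eqVneq v x) => [ev|vx].
- by subst; rewrite adj_irrefl in huv.
- case: (eqVneq v y) => [//|vy]; have := ltn_ord (f v); lia.
- case: (eqVneq u y) => [//|uy]; have := ltn_ord (f u); lia.
case: (eqVneq u y) => [eu|uy]; case: (eqVneq v y) => [ev|vy].
- by subst; rewrite adj_irrefl in huv.
- have := ltn_ord (f v); lia.
- have := ltn_ord (f u); lia.
by apply: Hf => //; apply: inC2.
Qed.

Lemma common_color (T : finType) (G : sgraph T) x y m (f : {ffun T -> 'I_m}) :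
  adj G x y ->
  (forall u v, u \in ~: [set x; y] -> v \in ~: [set x; y] -> adj G u v ->
     nat_of_ord (f u) != nat_of_ord (f v)) ->
  m.+1 < chromatic G ->
  forall i : 'I_m, exists w, [&& adj G x w, adj G y w & nat_of_ord (f w) == nat_of_ord i].
Proof.
move=> hxy Hf hm i.
case: (boolP [exists w, [&& adj G x w, adj G y w & nat_of_ord (f w) == nat_of_ord i]]) => [/existsP //|/existsPn Hno].
exfalso; move: hm; apply/negP; rewrite -leqNgt; apply: chi_min.
have xy : x != y by apply/eqP => e; subst; rewrite adj_irrefl in hxy.
have il := ltn_ord i.
apply: (@colorable_nat _ _ _ _ (fun u => if u == x then nat_of_ord i else if u == y then m
   else if (nat_of_ord (f u) == nat_of_ord i) && adj G x u then m else nat_of_ord (f u))).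
  move=> u; (repeat case: ifP => _);  try lia.
  have := ltn_ord (f u); lia.
have key : forall v, adj G y v -> v != x -> v != y ->
   ((nat_of_ord (f v) == nat_of_ord i) && adj G x v) = false.
  move=> v hyv vx vy; apply/negP => /andP [e hxv].
  by have := Hno v; rewrite hxv hyv e.
have key2 : forall v, adj G x v -> ((nat_of_ord (f v) == nat_of_ord i) && adj G x v) = (nat_of_ord (f v) == nat_of_ord i).
  by move=> v ->; rewrite andbT.
move=> u v _ _ huv.
case: (eqVneq u x) => [eu|ux]; case: (eqVneq v x) => [ev|vx].
- by subst; rewrite adj_irrefl in huv.
- subst u; rewrite ?eqxx ?(negbTE vx); case: (eqVneq v y) => [_|vy]; first lia.
  rewrite key2 //; case: ifP => //; lia.
- subst v; rewrite ?eqxx ?(negbTE ux); case: (eqVneq u y) => [_|uy]; first lia.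
  rewrite key2; last by rewrite adj_sym.
  case: ifP => //; lia.
case: (eqVneq u y) => [eu|uy]; case: (eqVneq v y) => [ev|vy].
- by subst; rewrite adj_irrefl in huv.
- subst u; rewrite ?eqxx ?(negbTE ux) ?(negbTE vx) ?(negbTE vy) key //; have := ltn_ord (f v); lia.
- subst v; rewrite ?eqxx ?(negbTE ux) ?(negbTE vx) ?(negbTE uy) key //; last by rewrite adj_sym.
  have := ltn_ord (f u); lia.
have := Hf u v (inC2 ux uy) (inC2 vx vy) huv.
rewrite ?(negbTE ux) ?(negbTE vx) ?(negbTE uy) ?(negbTE vy).
move=> hne; case: ifP => [/andP [/eqP e1 _]|_]; case: ifP => [/andP [/eqP e2 _]|_].
- by move: hne; rewrite e1 e2 eqxx.
- have := ltn_ord (f v); lia.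
- have := ltn_ord (f u); lia.
- exact: hne.
Qed.

Definition DC (T : finType) (G : sgraph T) :=
  forall a b, adj G a b -> chi G (~: [set a; b]) <= chromatic G - 2.

Lemma good_col (T : finType) (G : sgraph T) x y : DC G -> 2 <= chromatic G ->
  adj G x y -> exists m (f : {ffun T -> 'I_m}),
  [/\ forall u v, u \in ~: [set x; y] -> v \in ~: [set x; y] -> adj G u v ->
     nat_of_ord (f u) != nat_of_ord (f v), m.+1 < chromatic G & chromatic G <= m.+2].
Proof.
move=> Hdc Hk hxy; have hc := chi_spec G (~: [set x; y]).
have h1 := Hdc _ _ hxy; have h2 := chi_add2 hxy hc.
case/colorableP: hc => f Hf; exists (chi G (~: [set x; y])), f; split => //; lia.
Qed.

Lemma nbhdE (T : finType) (G : sgraph T) x y : (y \in nbhd G x) = adj G x y.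
Proof. by rewrite inE. Qed.

Lemma coE (T : finType) (G : sgraph T) x y z :
  co_adj G x y z = [&& adj G x y, adj G x z, y != z & ~~ adj G y z].
Proof. by rewrite /co_adj !nbhdE. Qed.

Lemma adj_neq (T : finType) (G : sgraph T) a b : adj G a b -> a != b.
Proof. by apply: contraTneq => ->; rewrite adj_irrefl. Qed.

Lemma L1 (T : finType) (G : sgraph T) x y z : DC G -> 2 <= chromatic G ->
  co_adj G x y z -> exists w, co_adj G x y w && adj G z w.
Proof.
move=> Hdc Hk; rewrite coE => /and4P [hxy hxz yz nyz].
have [m [f [Hf hm _]]] := good_col Hdc Hk hxz.
have [w /and3P [hxw hzw /eqP fw]] := common_color hxz Hf hm (f y).
exists w; rewrite coE hxy hxw hzw /= andbT.
have yw : y != w by apply: contraNneq nyz => ->; rewrite adj_sym.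
rewrite yw /=; apply/negP => hyw.
have hy : y \in ~: [set x; z] by apply: inC2; rewrite // eq_sym (adj_neq hxy).
have hw : w \in ~: [set x; z].
  apply: inC2; first by rewrite eq_sym (adj_neq hxw).
  by rewrite eq_sym (adj_neq hzw).
by move: (Hf y w hy hw hyw); rewrite fw eqxx.
Qed.

Lemma D (T : finType) (G : sgraph T) x y : DC G -> 2 <= chromatic G ->
  deg G x = (chromatic G).+1 -> adj G x y ->
  #|[set z | co_adj G x y z]| <= 2.
Proof.
move=> Hdc Hk Hdeg hxy.
have [m [f [Hf hm hm2]]] := good_col Hdc Hk hxy.
set Cm := nbhd G x :&: nbhd G y.
have h1 : m <= #|Cm|.
  have : [set: 'I_m] \subset f @: Cm.
    apply/subsetP => i _; have [w /and3P [hxw hyw /eqP fw]] := common_color hxy Hf hm i.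
    apply/imsetP; exists w; first by rewrite inE !nbhdE hxw hyw.
    by apply: val_inj.
  move/subset_leq_card; rewrite cardsT card_ord => h; apply: leq_trans h _.
  exact: leq_imset_card.
have hsub : [set z | co_adj G x y z] \subset nbhd G x :\: (y |: Cm).
  apply/subsetP => z; rewrite !inE coE => /and4P [_ hxz yz nyz].
  by rewrite hxz negb_or (eq_sym z) yz /= andbT (negbTE nyz).
have := subset_leq_card hsub; rewrite cardsD.
have -> : nbhd G x :&: (y |: Cm) = y |: Cm.
  apply/setIidPr/subsetP => z; rewrite !inE => /orP [/eqP -> //|/andP [] //].
rewrite cardsU1 /=.
have -> : y \notin Cm by rewrite !inE adj_irrefl andbF.
move: Hdeg; rewrite /deg => ->; lia.
Qed.

Lemma le2 (T : finType) (G : sgraph T) x y a b c : DC G -> 2 <= chromatic G ->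
  deg G x = (chromatic G).+1 ->
  co_adj G x y a -> co_adj G x y b -> co_adj G x y c ->
  [|| a == b, a == c | b == c].
Proof.
move=> Hdc Hk Hdeg ha hb hc.
have hxy : adj G x y by move: ha; rewrite coE => /and4P [].
have := D Hdc Hk Hdeg hxy.
have : [set a; b; c] \subset [set z | co_adj G x y z].
  by apply/subsetP => z; rewrite !inE => /orP [/orP [] |] /eqP ->.
move/subset_leq_card => h1 h2; have := leq_trans h1 h2.
rewrite -setUA cardsU1 cards2 !inE.
by case: (a == b); case: (a == c); case: (b == c); rewrite ?orbT //=; lia.
Qed.

Lemma split_ex (X : eqType) (s : seq X) w : w \in s -> exists p1 p2, s = p1 ++ w :: p2.
Proof. by case/splitPr => p1 p2; exists p1, p2. Qed.

Lemma next_neq_prev (X : eqType) (s : seq X) y :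
  uniq s -> 3 <= size s -> y \in s -> next s y != prev s y.
Proof.
move=> us hs ys; apply/eqP => e.
have h2 : next s (next s y) = y by rewrite e next_prev.
case: (rot_to ys) => i s' E.
have ur : uniq (y :: s') by rewrite -E rot_uniq.
have sz : 3 <= size (y :: s') by rewrite -E size_rot.
move: h2; rewrite -!(next_rot i us) E.
case: s' ur sz E => [|b [|c t]] //= ur _ _.
rewrite eqxx.
have -> : (b == y) = false.
  by apply/negP => /eqP eb; subst; move: ur; rewrite inE eqxx.
rewrite eqxx => ec; subst c.
by move: ur; rewrite !inE eqxx !orbT.
Qed.

Lemma usize (T : finType) (s : seq T) : uniq s -> size s <= #|T|.
Proof. by move/card_uniqP <-; apply: max_card. Qed.

Lemma extend (T : finType) (r : rel T) u : forall n p,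
  #|T| - size p <= n -> uniq (u :: p) -> path r u p ->
  exists p', [/\ uniq (u :: p'), path r u p' &
     forall w, r (last u p') w -> w \in u :: p'].
Proof.
elim=> [|n IH] p hn up pp.
  exists p; split => // w _; apply: contraT => hw.
  have : uniq (w :: u :: p) by rewrite cons_uniq hw up.
move/usize => /= h; exfalso; move: h hn; set N := #|T|; set m := size p; lia.
case: (boolP [exists w, r (last u p) w && (w \notin u :: p)]).
  case/existsP => w /andP [hw nw].
  apply: (IH (rcons p w)).
  - have : uniq (w :: u :: p) by rewrite cons_uniq nw up.
    move/usize; rewrite size_rcons /=; move: hn; set N := #|T|; set m := size p; lia.
  - by rewrite -rcons_cons rcons_uniq nw up.
  - by rewrite rcons_path pp hw.
move/existsPn => H; exists p; split => // w hw; apply: contraT => nw.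
by have := H w; rewrite hw nw.
Qed.

Lemma cycle_of (T : finType) (r : rel T) u v :
  symmetric r -> irreflexive r ->
  (forall y a b c, r y a -> r y b -> r y c -> [|| a == b, a == c | b == c]) ->
  (forall y z, r y z -> exists w, r y w && (w != z)) ->
  r u v ->
  exists s, [/\ uniq s, 3 <= size s, [set w | connect r u w] = [set w in s] &
      {in [set w | connect r u w] &, forall a b,
         r a b = (b == next s a) || (a == next s b)}].
Proof.
move=> symr irr le2 l1 huv.
have [p [up pp mx]] := @extend T r u #|T| [::] (leq_subr _ _) isT isT.
case/lastP: p up pp mx => [|q L] up pp mx.
  by have := mx v huv; rewrite inE => /eqP ev; subst v; rewrite irr in huv.
rewrite last_rcons in mx.
have pp' := pp; rewrite rcons_path in pp'; case/andP: pp' => pq hpL.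
set pL := last u q in hpL.
have hLpL : r L pL by rewrite symr.
have [w /andP [hLw wpL]] := l1 L pL hLpL.
have hw := mx w hLw.
have wL : w != L by apply: contraTneq hLw => ->; rewrite irr.
have ew : w = u.
  apply/eqP; apply: contraT => wu.
  have [p1 [p2 E]] := split_ex hw.
  case/lastP: p1 E => [|p1' a] E.
    by move: E => [] eu; rewrite eu eqxx in wu.
  case: p2 E => [|b p2'] E.
    have := congr1 (last u) E; rewrite /= last_rcons cats1 last_rcons => eL.
    by rewrite eL eqxx in wL.
  rewrite cat_rcons in E.
  have ss : sorted r (p1' ++ a :: w :: b :: p2') by rewrite -E.
  have := (cat_sorted2 ss).2 => /= /and3P [haw hwb _].
  have : uniq (p1' ++ a :: w :: b :: p2') by rewrite -E.
  rewrite cat_uniq => /and3P [_ _] /= /and4P [na nw nb _].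
  have hL : L = last b p2'.
    by have := congr1 (last u) E; rewrite /= last_rcons last_cat.
  have hwa : r w a by rewrite symr.
  have hwL : r w L by rewrite symr.
  have := le2 w a b L hwa hwb hwL.
  case/or3P => /eqP e.
  - by move: na; rewrite e !inE eqxx !orbT.
  - by move: na; rewrite e hL; have := mem_last b p2'; rewrite !inE => /orP [->|->]; rewrite ?orbT.
  clear ss na nw; case: p2' E nb hL => [|c p3] E nb hL.
    have E2 : rcons (u :: q) L = rcons (p1' ++ [:: a; w]) b.
      by rewrite rcons_cons E -cats1 -catA.
    case/rcons_inj: E2 => Eq _.
    have : pL = w by rewrite /pL -[last u q]/(last u (u :: q)) Eq last_cat.
    by move=> e2; rewrite e2 eqxx in wpL.
  have hb : b \in c :: p3 by rewrite e hL; move: (mem_last c p3).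
  by move: nb; rewrite hb.
subst w.
have qn : q != [::] by apply/negP => /eqP eq; move: wpL; rewrite /pL eq eqxx.
set s := u :: rcons q L.
have us : uniq s by [].
have cyc : cycle r s by rewrite /s /= rcons_path pp last_rcons hLw.
have sz : 3 <= size s by rewrite /s /= size_rcons; move: qn; case: (q) => //.
have Nb : forall y z, y \in s -> r y z -> (z == next s y) || (z == prev s y).
  move=> y z ys hyz.
  have hp : r y (prev s y) by rewrite symr; exact: prev_cycle cyc ys.
  have := le2 y (next s y) (prev s y) z (next_cycle cyc ys) hp hyz.
  case/or3P => [/eqP e|/eqP <-|/eqP <-]; rewrite ?eqxx ?orbT //.
  by move: (next_neq_prev us sz ys); rewrite e eqxx.
have cl : forall a b, a \in s -> r a b -> b \in s.
  move=> a b ha hab.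
  by case/orP: (Nb a b ha hab) => /eqP ->; rewrite ?mem_next ?mem_prev.
have clp : forall pth a, a \in s -> path r a pth -> last a pth \in s.
  elim => [|b pth IH] a ha //= /andP [hab hp]; apply: IH hp; exact: cl ha hab.
have Cs : [set w | connect r u w] = [set w in s].
  apply/setP => w; rewrite !in_set; apply/idP/idP.
    move=> /connectP [pth hp ->]; apply: clp hp; exact: mem_head.
  by move=> ws; apply: (path_connect pp).
exists s; split => //.
move=> a b; rewrite Cs !in_set => ca cb; apply/idP/idP.
  move=> hab; case/orP: (Nb a b ca hab) => [->//|/eqP ->].
  by rewrite next_prev // eqxx orbT.
case/orP => /eqP ->; first exact: next_cycle.
by rewrite symr; apply: next_cycle.
Qed.

Lemma chi2 (T : finType) (G : sgraph T) a b : adj G a b -> 2 <= chromatic G.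
Proof.
move=> hab; case/colorableP: (chi_spec G [set: T]) => f Hf.
have := Hf a b (in_setT a) (in_setT b) hab.
have := ltn_ord (f a); have := ltn_ord (f b).
rewrite /chromatic; set N := chi G _; lia.
Qed.

Lemma L1f (T : finType) (G : sgraph T) x a y m (f : {ffun T -> 'I_m}) :
  adj G x a ->
  (forall u v, u \in ~: [set x; a] -> v \in ~: [set x; a] -> adj G u v ->
     nat_of_ord (f u) != nat_of_ord (f v)) ->
  m.+1 < chromatic G ->
  co_adj G x a y -> exists w, [&& co_adj G x y w, adj G a w & nat_of_ord (f w) == f y].
Proof.
move=> hxa Hf hm; rewrite coE => /and4P [_ hxy ay nay].
have [w /and3P [hxw haw /eqP fw]] := common_color hxa Hf hm (f y).
exists w; rewrite coE hxy hxw haw fw eqxx /= andbT.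
have yw : y != w by apply: contraNneq nay => ->.
rewrite yw /=; apply/negP => hyw.
have hy : y \in ~: [set x; a].
  apply: inC2; first by rewrite eq_sym; exact: (adj_neq hxy).
  by rewrite eq_sym.
have hw : w \in ~: [set x; a].
  apply: inC2; first by rewrite eq_sym (adj_neq hxw).
  by rewrite eq_sym (adj_neq haw).
by move: (Hf y w hy hw hyw); rewrite fw eqxx.
Qed.

Lemma no_small (T : finType) (G : sgraph T) x (s : seq T) (C : {set T}) :
  DC G -> 2 <= chromatic G -> deg G x = (chromatic G).+1 ->
  uniq s -> 3 <= size s -> C = [set v in s] ->
  {in C &, forall a b, co_adj G x a b = (b == next s a) || (a == next s b)} ->
  5 <= size s.
Proof.
move=> Hdc hk2 hdeg us sz EC Hs.
have mC : forall v, v \in s -> v \in C by move=> v hv; rewrite EC in_set.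
case: s us sz EC Hs mC => [|a [|b [|c [|d [|e t]]]]] // us _ EC Hs mC.
-
  have ab : a != b by apply: contraTneq us => ->; rewrite /= !inE !eqxx ?orbT ?andbF.
  have ac : a != c by apply: contraTneq us => ->; rewrite /= !inE !eqxx ?orbT ?andbF.
  have bc : b != c by apply: contraTneq us => ->; rewrite /= !inE !eqxx ?orbT ?andbF.
  have ba := ab; rewrite eq_sym in ba; have ca := ac; rewrite eq_sym in ca.
  have cb := bc; rewrite eq_sym in cb.
  have ma : a \in C by apply: mC; rewrite !inE eqxx.
  have mb : b \in C by apply: mC; rewrite !inE eqxx !orbT.
  have mc : c \in C by apply: mC; rewrite !inE eqxx !orbT.
  have rba := Hs b a mb ma; have rbc := Hs b c mb mc; have rac := Hs a c ma mc.
  rewrite /next /= !eqxx ?(negbTE ab) ?(negbTE ac) ?(negbTE bc) ?(negbTE ba)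
     ?(negbTE ca) ?(negbTE cb) /= ?orbT in rba rbc rac.
  rewrite ?eqxx ?orbT in rba rbc rac.
  have [w /andP [hbw haw]] := L1 Hdc hk2 rba.
  have := le2 Hdc hk2 hdeg rba rbc hbw; rewrite (negbTE ac) /=.
  case/orP => /eqP e; first by subst w; rewrite adj_irrefl in haw.
  subst w; move: rac; rewrite coE => /and4P [_ _ _].
  by rewrite haw.
-
  have ab : a != b by apply: contraTneq us => ->; rewrite /= !inE !eqxx ?orbT ?andbF.
  have ac : a != c by apply: contraTneq us => ->; rewrite /= !inE !eqxx ?orbT ?andbF.
  have ad : a != d by apply: contraTneq us => ->; rewrite /= !inE !eqxx ?orbT ?andbF.
  have bc : b != c by apply: contraTneq us => ->; rewrite /= !inE !eqxx ?orbT ?andbF.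
  have bd : b != d by apply: contraTneq us => ->; rewrite /= !inE !eqxx ?orbT ?andbF.
  have cd : c != d by apply: contraTneq us => ->; rewrite /= !inE !eqxx ?orbT ?andbF.
  have ba := ab; rewrite eq_sym in ba; have ca := ac; rewrite eq_sym in ca.
  have da := ad; rewrite eq_sym in da; have cb := bc; rewrite eq_sym in cb.
  have db := bd; rewrite eq_sym in db; have dc := cd; rewrite eq_sym in dc.
  have ma : a \in C by apply: mC; rewrite !inE eqxx.
  have mb : b \in C by apply: mC; rewrite !inE eqxx !orbT.
  have mc : c \in C by apply: mC; rewrite !inE eqxx !orbT.
  have md : d \in C by apply: mC; rewrite !inE eqxx !orbT.
  have rab := Hs a b ma mb; have rba := Hs b a mb ma; have rbc := Hs b c mb mc.
  have rad := Hs a d ma md; have rda := Hs d a md ma; have rdc := Hs d c md mc.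
  have rac := Hs a c ma mc; have rbd := Hs b d mb md.
  rewrite /next /= !eqxx ?(negbTE ab) ?(negbTE ac) ?(negbTE bc) ?(negbTE ba)
     ?(negbTE ca) ?(negbTE cb) ?(negbTE ad) ?(negbTE da) ?(negbTE bd)
     ?(negbTE db) ?(negbTE cd) ?(negbTE dc) /= ?orbT
     in rab rba rbc rad rda rdc rac rbd.
  rewrite ?eqxx ?orbT ?(negbTE ab) ?(negbTE ac) ?(negbTE bc) ?(negbTE ba)
     ?(negbTE ca) ?(negbTE cb) ?(negbTE ad) ?(negbTE da) ?(negbTE bd)
     ?(negbTE db) ?(negbTE cd) ?(negbTE dc) /= ?orbF in rab rba rbc rad rda rdc rac rbd.
  have hxa : adj G x a by move: rab; rewrite coE => /and4P [].
  have [m [f [Hf hm _]]] := good_col Hdc hk2 hxa.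
  have [w1 /and3P [hbw1 haw1 /eqP fw1]] := L1f hxa Hf hm rab.
  have [w2 /and3P [hdw2 haw2 /eqP fw2]] := L1f hxa Hf hm rad.
  have := le2 Hdc hk2 hdeg rba rbc hbw1; rewrite (negbTE ac) /=.
  case/orP => /eqP e1; first by subst w1; rewrite adj_irrefl in haw1.
  have := le2 Hdc hk2 hdeg rda rdc hdw2; rewrite (negbTE ac) /=.
  case/orP => /eqP e2; first by subst w2; rewrite adj_irrefl in haw2.
  subst w1 w2.
  have hxb : adj G x b by move: rba; rewrite coE => /and4P [].
  have hxd : adj G x d by move: rda; rewrite coE => /and4P [].
  have hbd : adj G b d by move: rbd; rewrite coE hxb hxd bd /= => /negbFE.
  have mb' : b \in ~: [set x; a].
    by apply: inC2; [rewrite eq_sym; exact: (adj_neq hxb) | exact: ba].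
  have md' : d \in ~: [set x; a].
    by apply: inC2; [rewrite eq_sym; exact: (adj_neq hxd) | exact: da].
  by move: (Hf b d mb' md' hbd); rewrite -fw1 -fw2 eqxx.
Qed.

Theorem proposition14 (T : finType) (G : sgraph T) (k : nat) (x : T) :
  ~ complete G ->
  double_critical G ->
  chromatic G = k ->
  deg G x = k.+1 ->
  [/\ (forall C, C \in co_components G x ->
         #|C| = 1 \/ is_cycle (co_adj G x) C),
      (exists2 C, C \in co_components G x & is_cycle (co_adj G x) C) &
      (forall C, C \in co_components G x ->
         is_cycle (co_adj G x) C -> 5 <= #|C|)].
Proof.
move=> _ [_ hdc] hk hdeg.
have Hdc : DC G by move=> a b hab; exact: hdc.
have [y0 hy0] : exists y0, y0 \in nbhd G x.
  by apply/set0Pn; rewrite -card_gt0; move: hdeg; rewrite /deg => ->.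
have hk2 : 2 <= chromatic G by apply: (@chi2 _ _ x y0); rewrite -nbhdE.
have hdeg' : deg G x = (chromatic G).+1 by rewrite hk.
have symr : symmetric (co_adj G x).
  move=> a b; rewrite !coE (eq_sym a b) (adj_sym G a b).
  by case: (adj G x a); case: (adj G x b).
have irr : irreflexive (co_adj G x) by move=> a; rewrite coE eqxx /= !andbF.
have le2' := le2 Hdc hk2 hdeg'.
have l1' : forall y z, co_adj G x y z -> exists w, co_adj G x y w && (w != z).
  move=> y z hyz; have [w /andP [hyw hzw]] := L1 Hdc hk2 hyz.
  by exists w; rewrite hyw eq_sym (adj_neq hzw).
have cyc : forall u v, co_adj G x u v -> is_cycle (co_adj G x) (co_component G x u).
  move=> u v huv; have [s [us sz Cs Hs]] := cycle_of symr irr le2' l1' huv.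
  by exists s; split.
split.
- move=> C /imsetP [u hu ->].
  case: (boolP [exists v, co_adj G x u v]) => [/existsP [v huv]|/existsPn hno].
    by right; exact: cyc huv.
  left; have -> : co_component G x u = [set u].
    apply/setP => w; rewrite /co_component !inE; apply/idP/idP.
      case/connectP => [[|b pth]] /=; first by move=> _ ->.
      by case/andP => hub; have := hno b; rewrite hub.
    by move/eqP => ->; exact: connect0.
  exact: cards1.
- case: (boolP [exists u, exists v, co_adj G x u v]).
    case/existsP => u /existsP [v huv].
    exists (co_component G x u); last exact: cyc huv.
    apply/imsetP; exists u => //.
    by move: huv; rewrite coE nbhdE => /and4P [].
  move/existsPn => hno; exfalso.
  set K := x |: nbhd G x.
  have adjK : forall a b, a \in K -> b \in K -> a != b -> adj G a b.
    move=> a b; rewrite !inE => /orP [/eqP ->|ha] /orP [/eqP ->|hb] ab.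
    - by rewrite eqxx in ab.
    - by [].
    - by rewrite adj_sym.
    move: (hno a) => /existsPn /(_ b); rewrite coE ha hb ab /=.
    by move/negbNE.
  case/colorableP: (chi_spec G [set: T]) => f Hf.
  have inj : {in K &, injective f}.
    move=> a b ha hb e; apply/eqP; apply: contraT => ab.
    by have := Hf a b (in_setT _) (in_setT _) (adjK a b ha hb ab); rewrite e eqxx.
  have h1 := card_in_imset inj.
  have h2 := max_card (f @: K); rewrite card_ord in h2.
  have h3 : #|K| = k.+2.
    rewrite cardsU1 -/(deg G x) hdeg inE adj_irrefl //.
  rewrite /chromatic in hk; move: h1 h2 h3 hk; set N := chi G _; set M := #|f @: K|; lia.
- move=> C /imsetP [u hu ->] [s [us sz EC Hs]].
  have := no_small Hdc hk2 hdeg' us sz EC Hs.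
  rewrite EC cardsE; move/card_uniqP: (us) => ->; done.
Qed.
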